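(* Let $t\in[n]$ and let $S\subseteq N$ be $t$-switchable. Then the ideals $\tilde{\mathcal{I}}^{\langle t\rangle}_S$ and $P^{\langle t\rangle}_S$ of $R$ are prime.
   Context: Fix positive integers $n, r_1,\dots,r_n$, let $N=[r_1]\times\cdots\times[r_n]$, and let $R$ be the polynomial ring over a field in the variables $x_a$, $a\in N$. For $a,b\in N$ and $i\in[n]$, ${\rm s}(i,a,b)\in N$ has $i$-th component $b_i$ and other components equal to those of $a$. Let $d(a,b)=\#\{j: a_j\neq b_j\}$ and $f_{i,a,b}=x_ax_b-x_{{\rm s}(i,a,b)}x_{{\rm s}(i,b,a)}$. A subset $S\subseteq N$ is $t$-switchable if for all $a,b\in S$ with $d(a,b)=2$ and all $i\in[t]$, ${\rm s}(i,a,b)\in S$. Elements $a,b\in S$ are connected in $S$ if there are $a_0=a,\dots,a_k=b$ in $S$ with $d(a_{j-1},a_j)\le 1$ for all $j$. Set $\tilde{\mathcal{I}}^{\langle t\rangle}_S=(f_{i,a,b}: i\in[t],\ a,b \text{ connected in } S)$, $\mathrm{Var}^{\langle t\rangle}_S=(x_a: a\notin S)$, $P^{\langle t\rangle}_S=\mathrm{Var}^{\langle t\rangle}_S+\tilde{\mathcal{I}}^{\langle t\rangle}_S$. *)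

(* Defs.v *)
From HB Require Import structures.
From mathcomp Require Import all_boot all_order all_algebra.
From mathcomp Require Import mpoly.
Set Implicit Arguments. Unset Strict Implicit. Unset Printing Implicit Defensive.
Import GRing.Theory.
Local Open Scope ring_scope.

(* The index set N = [r_1] x ... x [r_n], with 0-based coordinates:
   a : N assigns to each i : 'I_n a value a i : 'I_(r i). *)
Definition Nset (n : nat) (r : 'I_n -> nat) : finType :=
  {dffun forall i : 'I_n, 'I_(r i)}.

Definition swt n (r : 'I_n -> nat) (i : 'I_n) (a b : Nset r) : Nset r :=
  [ffun j => if j == i then b j else a j].

Definition dist n (r : 'I_n -> nat) (a b : Nset r) : nat :=
  #|[set j | a j != b j]|.

(* S is t-switchable; i ∈ [t] corresponds to the 0-based index i < t *)
Definition switchable n (r : 'I_n -> nat) (t : nat) (S : {set Nset r}) : Prop :=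
  forall a b, a \in S -> b \in S -> dist a b = 2%N ->
  forall i : 'I_n, (i < t)%N -> swt i a b \in S.

Definition connected_in n (r : 'I_n -> nat) (S : {set Nset r}) (a b : Nset r) : Prop :=
  exists p : seq (Nset r),
    [/\ all (fun x => x \in S) (a :: p),
        path (fun x y => (dist x y <= 1)%N) a p & last a p = b].

(* The polynomial ring R = F[x_a : a ∈ N]; variable x_a is 'X_(enum_rank a). *)
Definition polyR (F : fieldType) n (r : 'I_n -> nat) :=
  {mpoly F[#|Nset r|]}.

Definition xv (F : fieldType) n (r : 'I_n -> nat) (a : Nset r) : polyR F r :=
  'X_(enum_rank a).

Arguments xv F {n r} a.

Definition fbin (F : fieldType) n (r : 'I_n -> nat) (i : 'I_n) (a b : Nset r)
  : polyR F r :=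
  xv F a * xv F b - xv F (swt i a b) * xv F (swt i b a).

Arguments fbin F {n r} i a b.

Definition ideal_gen (A : comNzRingType) (G : A -> Prop) : A -> Prop :=
  fun p => exists s : seq (A * A),
    (forall q, q \in s -> G q.2) /\ p = \sum_(q <- s) q.1 * q.2.

Definition ideal_add (A : comNzRingType) (I J : A -> Prop) : A -> Prop :=
  fun p => exists u v, [/\ I u, J v & p = u + v].

Definition prime_ideal (A : comNzRingType) (I : A -> Prop) : Prop :=
  ~ I 1 /\ forall a b, I (a * b) -> I a \/ I b.

Definition Itilde (F : fieldType) n (r : 'I_n -> nat) (t : nat) (S : {set Nset r})
  : polyR F r -> Prop :=
  ideal_gen (fun g => exists (i : 'I_n) (a b : Nset r),
    [/\ (i < t)%N, connected_in S a b & g = fbin F i a b]).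

Arguments Itilde F {n r} t S _.

Definition VarS (F : fieldType) n (r : 'I_n -> nat) (S : {set Nset r})
  : polyR F r -> Prop :=
  ideal_gen (fun g => exists a : Nset r, a \notin S /\ g = xv F a).

Arguments VarS F {n r} S _.

Definition PS (F : fieldType) n (r : 'I_n -> nat) (t : nat) (S : {set Nset r})
  : polyR F r -> Prop :=
  ideal_add (VarS F S) (Itilde F t S).

Arguments PS F {n r} t S _.

(* Main.v *)
Require Import Defs.
From HB Require Import structures.
From mathcomp Require Import all_boot all_order all_algebra.
From mathcomp Require Import mpoly.
From mathcomp Require Import ring zify.
Set Implicit Arguments. Unset Strict Implicit. Unset Printing Implicit Defensive.
Import GRing.Theory.
Local Open Scope ring_scope.


Lemma ig0 (A : comNzRingType) (G : A -> Prop) : ideal_gen G 0.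
Proof. by exists [::]; split=> //; rewrite big_nil. Qed.

Lemma igD (A : comNzRingType) (G : A -> Prop) p q :
  ideal_gen G p -> ideal_gen G q -> ideal_gen G (p + q).
Proof.
case=> s1 [h1 ->] [s2 [h2 ->]]; exists (s1 ++ s2); split; last by rewrite big_cat.
by move=> x; rewrite mem_cat => /orP[]; [apply: h1 | apply: h2].
Qed.

Lemma igM (A : comNzRingType) (G : A -> Prop) c p :
  ideal_gen G p -> ideal_gen G (c * p).
Proof.
case=> s [h ->]; exists [seq (c * q.1, q.2) | q <- s]; split.
  by move=> q /mapP[q' /h hq ->].
by rewrite big_map mulr_sumr; apply: eq_bigr => q _; rewrite mulrA.
Qed.

Lemma igG (A : comNzRingType) (G : A -> Prop) g : G g -> ideal_gen G g.
Proof.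
move=> hg; exists [:: (1, g)]; split; first by move=> q; rewrite inE => /eqP ->.
by rewrite big_seq1 mul1r.
Qed.

Lemma igN (A : comNzRingType) (G : A -> Prop) p : ideal_gen G p -> ideal_gen G (- p).
Proof. by move=> h; rewrite -mulN1r; apply: igM. Qed.

Lemma igB (A : comNzRingType) (G : A -> Prop) p q :
  ideal_gen G p -> ideal_gen G q -> ideal_gen G (p - q).
Proof. by move=> hp hq; apply: igD => //; apply: igN. Qed.

Lemma igsum (A : comNzRingType) (G : A -> Prop) (I : eqType) (s : seq I) (f : I -> A) :
  (forall i, i \in s -> ideal_gen G (f i)) -> ideal_gen G (\sum_(i <- s) f i).
Proof.
elim: s => [|x s IH] h; first by rewrite big_nil; apply: ig0.
rewrite big_cons; apply: igD; first by apply: h; rewrite inE eqxx.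
by apply: IH => i hi; apply: h; rewrite inE hi orbT.
Qed.

Lemma sum_pos (I : finType) (P : pred I) (f : I -> nat) :
  (0 < \sum_(i | P i) f i)%N -> exists i, P i && (0 < f i)%N.
Proof.
move=> h; case: (pickP (fun i => P i && (0 < f i)%N)) => [i hi|h0]; first by exists i.
move: h; rewrite big1 // => i Pi; have := h0 i; rewrite Pi /=; by case: (f i).
Qed.

Lemma split_mnm N (m : 'X_{1..N}) i : (0 < m i)%N -> exists mr, m = (mr + U_(i))%MM.
Proof.
move=> h; exists [multinom (m j - (i == j))%N | j < N]; apply/mnmP=> j.
rewrite mnmDE mnmE mnm1E; case: (eqVneq i j) => [<-|_]; last by rewrite !subn0 addn0.
by rewrite subnK.
Qed.

Section Comb.
Variables (n : nat) (r : 'I_n -> nat) (t : nat) (S : {set Nset r}).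
Hypothesis hS : switchable t S.
Hypothesis ht : (t <= n)%N.

Lemma swtE i (a b : Nset r) j : swt i a b j = if j == i then b j else a j.
Proof. by rewrite /swt ffunE. Qed.

Lemma dist_sym (a b : Nset r) : dist a b = dist b a.
Proof. by rewrite /dist; apply: eq_card => j; rewrite !inE eq_sym. Qed.

Definition e : rel (Nset r) := fun x y => [&& x \in S, y \in S & (dist x y <= 1)%N].

Lemma e_sym : ssrbool.symmetric e.
Proof. by move=> x y; rewrite /e dist_sym andbCA. Qed.

Lemma csym : connect_sym e.
Proof. exact: sym_connect_sym e_sym. Qed.

Lemma path_e_S x p : x \in S -> path e x p -> all (fun y => y \in S) (x :: p).
Proof.
elim: p x => [|y p IH] x xS /=; first by rewrite xS.
by case/andP => /and3P[_ yS _] hp; rewrite xS /=; have := IH y yS hp.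
Qed.

Lemma conn_inP a b : connected_in S a b <-> a \in S /\ connect e a b.
Proof.
split.
  case=> p [hall hp hl]; move: (hall) => /= /andP[aS _]; split=> //.
  apply/connectP; exists p => //.
  elim: p a hall hp {hl aS} => [|y p IH] a //= /and3P[aS yS hall] /andP[hd hp].
  by rewrite /e aS yS hd /=; apply: IH => //=; rewrite yS.
case=> aS /connectP[p hp hl]; exists p; split=> //; first exact: path_e_S.
elim: p a aS hp {hl} => [|y p IH] a aS //= /andP[/and3P[_ yS hd] hp].
by rewrite hd /=; apply: IH.
Qed.

Lemma dist_swt_le i (x y : Nset r) : (dist x (swt i x y) <= 1)%N.
Proof.
rewrite /dist -(cards1 i); apply: subset_leq_card; apply/subsetP=> j.
by rewrite !inE swtE; case: (eqVneq j i) => [->|nji]; rewrite ?eqxx // (negbTE nji) eqxx.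
Qed.

Lemma dist0 (x y : Nset r) : dist x y = 0%N -> x = y.
Proof.
move/eqP; rewrite cards_eq0 => /eqP h; apply/ffunP => j.
apply/eqP; apply/negPn/negP => hj.
by have := in_set0 j; rewrite -h inE hj.
Qed.

Lemma closure_step (i : 'I_n) (x c y : Nset r) : (i < t)%N -> x \in S -> e x c -> swt i c y \in S ->
  swt i x y \in S.
Proof.
move=> hi xS /and3P[_ cS hd] uS.
have [d0|d1] : dist x c = 0%N \/ dist x c = 1%N by move: hd; case: (dist x c) => [|[|]]; auto.
  by rewrite (dist0 d0).
move/eqP: d1; rewrite /dist => /cards1P[j hj].
have hxc k : (x k != c k) = (k == j) by rewrite -[k == j]in_set1 -hj inE.
case: (eqVneq j i) => [ji|nji].
  suff -> : swt i x y = swt i c y by [].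
  apply/ffunP=> k; rewrite !swtE; case: eqP => // /eqP nki.
  by apply/eqP; apply/negPn; rewrite hxc ji.
case: (eqVneq (x i) (y i)) => [xy|nxy].
  suff -> : swt i x y = x by [].
  by apply/ffunP=> k; rewrite swtE; case: eqP => // ->.
set u := swt i c y.
have d2 : dist x u = 2%N.
  rewrite /dist (_ : [set k | x k != u k] = [set i; j]); first by rewrite cards2 eq_sym nji.
  apply/setP=> k; rewrite !inE /u swtE.
  case: (eqVneq k i) => [->|nki]; first by rewrite nxy.
  by rewrite hxc ?(negbTE nki).
have := hS xS uS d2 hi; congr (_ \in S); apply/ffunP=> k.
by rewrite !swtE; case: eqP.
Qed.

Lemma closure (i : 'I_n) (x y : Nset r) : (i < t)%N -> x \in S -> connect e x y -> swt i x y \in S.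
Proof.
move=> hi xS /connectP[p hp ->]; elim: p x xS hp => [|c p IH] x xS /=.
  by move=> _; suff -> : swt i x x = x by []; apply/ffunP=> k; rewrite swtE; case: eqP => // ->.
case/andP=> hxc hp; apply: (closure_step hi xS hxc); apply: IH => //.
by case/and3P: hxc.
Qed.

Lemma closure_conn (i : 'I_n) (x y : Nset r) : (i < t)%N -> x \in S -> connect e x y -> connect e x (swt i x y).
Proof.
move=> hi xS hxy; apply: connect1; rewrite /e xS closure //; exact: dist_swt_le.
Qed.


Lemma conn_S x y : x \in S -> connect e x y -> y \in S.
Proof.
move=> xS /connectP[p hp ->]; have /allP := path_e_S xS hp; apply; exact: mem_last.
Qed.

Definition rt (a : Nset r) := fingraph.root e a.

Lemma rt_eq x y : connect e x y -> rt x = rt y.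
Proof. by move=> h; apply/eqP; rewrite /rt root_connect //; exact: csym. Qed.

Lemma rt_conn x y : rt x = rt y -> connect e x y.
Proof. by move=> h; rewrite -root_connect; [apply/eqP | exact: csym]. Qed.

Definition tl (a : Nset r) : Nset r := [ffun j : 'I_n => if (j < t)%N then rt a j else a j].

Definition Tk : finType := (bool * option 'I_n * Nset r * Nset r)%type.

Definition cnt (a : Nset r) (tau : Tk) : nat :=
  if a \in S then ((tau == (true, None, rt a, tl a)) +
     \sum_(i : 'I_n | (i < t)%N) (tau == (true, Some i, rt a, swt i (rt a) a)))%N
  else (tau == (false, None, a, a)) : nat.

Lemma swap_cnt (i : 'I_n) x y tau : (i < t)%N -> x \in S -> connect e x y ->
  (cnt (swt i x y) tau + cnt (swt i y x) tau = cnt x tau + cnt y tau)%N.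
Proof.
move=> hi xS hxy.
have yS : y \in S by exact: conn_S hxy.
have hyx : connect e y x by rewrite csym.
set s := swt i x y; set s' := swt i y x.
have sS : s \in S by exact: closure.
have s'S : s' \in S by exact: closure.
have rs : rt s = rt x by apply/esym/rt_eq/closure_conn.
have rs' : rt s' = rt x by rewrite (rt_eq hxy); apply/esym/rt_eq/closure_conn.
have ry : rt y = rt x by rewrite (rt_eq hxy).
have tls : tl s = tl x.
  apply/ffunP=> j; rewrite !ffunE rs; case: ifP => // hj.
  rewrite ?swtE; case: eqP => // hji; by move: hj; rewrite hji hi.
have tls' : tl s' = tl y.
  apply/ffunP=> j; rewrite !ffunE rs' ry; case: ifP => // hj.
  rewrite ?swtE; case: eqP => // hji; by move: hj; rewrite hji hi.
rewrite /cnt sS s'S xS yS rs rs' ry tls tls'.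
set X := rt x.
rewrite addnACA [in RHS]addnACA -!big_split /=; congr (_ + _)%N.
apply: eq_bigr => j _.
have e1 : swt j X s = if j == i then swt j X y else swt j X x.
  apply/ffunP=> k; case: (eqVneq j i) => [->|nji]; rewrite /s !ffunE; case: eqP => // ->;
    rewrite ?eqxx ?(negbTE nji) //.
have e2 : swt j X s' = if j == i then swt j X x else swt j X y.
  apply/ffunP=> k; case: (eqVneq j i) => [->|nji]; rewrite /s' !ffunE; case: eqP => // ->;
    rewrite ?eqxx ?(negbTE nji) //.
by rewrite e1 e2; case: (j == i); rewrite // addnC.
Qed.


Definition psi (m : 'X_{1..#|Nset r|}) : 'X_{1..#|Tk|} :=
  [multinom (\sum_(i < #|Nset r|) m i * cnt (enum_val i) (enum_val j))%N | j < #|Tk|].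

Lemma psiE (m : 'X_{1..#|Nset r|}) tau : psi m (enum_rank tau) = (\sum_i m i * cnt (enum_val i) tau)%N.
Proof. by rewrite mnmE enum_rankK. Qed.

Lemma psiD m1 m2 : psi (m1 + m2)%MM = (psi m1 + psi m2)%MM.
Proof.
apply/mnmP=> j; rewrite mnmDE !mnmE -big_split /=; apply: eq_bigr => i _.
by rewrite mnmDE mulnDl.
Qed.

Lemma psiU i j : psi U_(i)%MM j = cnt (enum_val i) (enum_val j).
Proof.
rewrite mnmE (bigD1 i) //= mnm1E eqxx mul1n big1 ?addn0 // => l nli.
by rewrite mnm1E eq_sym (negbTE nli).
Qed.

Lemma psi_pos (m : 'X_{1..#|Nset r|}) tau : (0 < psi m (enum_rank tau))%N ->
  exists i, (0 < m i)%N /\ (0 < cnt (enum_val i) tau)%N.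
Proof.
rewrite psiE => /sum_pos[i /= h]; exists i; move: h; rewrite muln_gt0 => /andP[]; auto.
Qed.

Lemma psi_ge (m : 'X_{1..#|Nset r|}) i tau : (m i * cnt (enum_val i) tau <= psi m (enum_rank tau))%N.
Proof. by rewrite psiE (bigD1 i) //= leq_addr. Qed.

Lemma cnt_tail b : b \in S -> (0 < cnt b (true, None, rt b, tl b))%N.
Proof. by move=> bS; rewrite /cnt bS eqxx. Qed.

Lemma cnt_coord b (i : 'I_n) : b \in S -> (i < t)%N ->
  (0 < cnt b (true, Some i, rt b, swt i (rt b) b))%N.
Proof.
move=> bS hi; rewrite /cnt bS (bigD1 i) //= eqxx; by rewrite addnCA ltn_addr.
Qed.

Lemma cnt_out b : b \notin S -> (0 < cnt b (false, None, b, b))%N.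
Proof. by move=> /negbTE bS; rewrite /cnt bS eqxx. Qed.

Lemma cnt_tail_inv b x : (0 < cnt x (true, None, rt b, tl b))%N ->
  x \in S /\ (rt x = rt b /\ tl x = tl b).
Proof.
rewrite /cnt; case: ifP => xS //.
rewrite big1 ?addn0 => [|j _]; last by case: eqP => // -[].
by rewrite lt0b => /eqP [-> ->].
Qed.

Lemma cnt_coord_inv b x (i : 'I_n) :
  (0 < cnt x (true, Some i, rt b, swt i (rt b) b))%N ->
  [/\ x \in S, rt x = rt b & x i = b i].
Proof.
rewrite /cnt; case: ifP => xS //.
rewrite (_ : (_ == _) = false) ?add0n; last by case: eqP => // -[].
case/sum_pos => j /andP[_]; rewrite lt0b => /eqP [<- hr hs]; split=> //.
move/ffunP: hs => /(_ i); rewrite !swtE eqxx => ->.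
by [].
Qed.

Lemma cnt_out_inv b x : (0 < cnt x (false, None, b, b))%N -> x = b.
Proof.
rewrite /cnt; case: ifP => xS; last by rewrite lt0b => /eqP [->].
rewrite (_ : (_ == _) = false) ?add0n; last by case: eqP => // -[].
by case/sum_pos => j /andP[_]; case: eqP => // -[].
Qed.


Variable F : fieldType.

Local Notation I := (Itilde F t S).

Lemma psi0 : psi 0%MM = 0%MM.
Proof. by apply/mnmP=> j; rewrite mnmE mnm0E big1 // => i _; rewrite mnm0E. Qed.

Lemma tok_ex a : exists tau, (0 < cnt a tau)%N.
Proof.
case: (boolP (a \in S)) => aS; first by exists (true, None, rt a, tl a); exact: cnt_tail.
by exists (false, None, a, a); exact: cnt_out.
Qed.

Lemma swap_step (m2 : 'X_{1..#|Nset r|}) x y (i : 'I_n) : (i < t)%N -> x \in S ->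
  connect e x y -> x != y -> (0 < m2 (enum_rank x))%N -> (0 < m2 (enum_rank y))%N ->
  exists m3, [/\ I ('X_[m2] - 'X_[m3]), psi m3 = psi m2 & (0 < m3 (enum_rank (swt i x y)))%N].
Proof.
move=> hi xS hxy nxy hx hy.
have [ma ema] := split_mnm hx.
have hy' : (0 < ma (enum_rank y))%N.
  move: hy; rewrite ema mnmDE mnm1E (inj_eq enum_rank_inj) (negbTE nxy) addn0 //.
have [mb emb] := split_mnm hy'.
exists (mb + U_(enum_rank (swt i x y)) + U_(enum_rank (swt i y x)))%MM; split.
- rewrite ema emb !mpolyXD.
  have -> : forall A B C D E : polyR F r, A * B * C - A * D * E = A * (B * C - D * E)
    by move=> A B C D E; ring.
  apply: igM; apply: igG; exists i, x, y; split=> //; first by apply/conn_inP.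
  by rewrite /fbin /xv mulrC.
- apply/mnmP=> j; rewrite ema emb !psiD !mnmDE !psiU !enum_rankK.
  have := swap_cnt (enum_val j) hi xS hxy; lia.
- rewrite !mnmDE mnm1E eqxx; lia.
Qed.

Lemma move_b b (m : 'X_{1..#|Nset r|}) : b \in S ->
  (forall tau, cnt b tau <= psi m (enum_rank tau))%N ->
  exists m2, [/\ I ('X_[m] - 'X_[m2]), psi m2 = psi m & (0 < m2 (enum_rank b))%N].
Proof.
move=> bS hb.
have step : forall i, (i <= t)%N -> exists m2 x, [/\ I ('X_[m] - 'X_[m2]), psi m2 = psi m,
   (0 < m2 (enum_rank x))%N, x \in S &
   (rt x = rt b /\ forall j : 'I_n, (t <= j)%N || (j < i)%N -> x j = b j)].
  elim => [_|i IH hi].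
    have := leq_trans (cnt_tail bS) (hb _) => /psi_pos [v [hv /cnt_tail_inv [xS [hr htl]]]].
    exists m, (enum_val v); split=> //; first by rewrite subrr; apply: ig0.
      by rewrite enum_valK.
    split=> // j; rewrite orbF => hj.
    by move/ffunP: htl => /(_ j); rewrite !ffunE ltnNge hj.
  have [m2 [x [h1 h2 h3 xS [hr hc]]]] := IH (ltnW hi).
  have hin : (i < n)%N by apply: leq_trans hi ht.
  set i' := Ordinal hin.
  case: (eqVneq (x i') (b i')) => [xb|nxb].
    exists m2, x; split=> //; split=> // j /orP[hj|hj].
      by apply: hc; rewrite hj.
    move: hj; rewrite ltnS leq_eqVlt => /orP[/eqP hj|hj]; last by apply: hc; rewrite hj orbT.
    by have -> : j = i' by apply: val_inj.
  have hit : (i' < t)%N by [].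
  have := leq_trans (cnt_coord bS hit) (hb _); rewrite -h2.
  move=> /psi_pos [v [hv /cnt_coord_inv [yS hry hyb]]].
  set y := enum_val v in yS hry hyb.
  have nxy : x != y by apply/eqP => exy; move: nxb; rewrite exy hyb eqxx.
  have hxy : connect e x y by apply: rt_conn; rewrite hr hry.
  have hyv : (0 < m2 (enum_rank y))%N by rewrite /y enum_valK.
  have [m3 [g1 g2 g3]] := swap_step hit xS hxy nxy h3 hyv.
  exists m3, (swt i' x y); split.
  - have -> : 'X_[m] - 'X_[m3] = ('X_[m] - 'X_[m2]) + ('X_[m2] - 'X_[m3]) :> polyR F r by ring.
    by apply: igD.
  - by rewrite g2.
  - by [].
  - exact: closure.
  split; first by rewrite -hr; apply/esym/rt_eq/closure_conn.
  move=> j hj; rewrite swtE; case: eqP => [->|/eqP nji] //.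
  apply: hc; move: hj => /orP[->//|]; rewrite ltnS leq_eqVlt => /orP[/eqP hj|->]; last by rewrite orbT.
  by case/eqP: nji; apply: val_inj.
have [m2 [x [h1 h2 h3 xS [hr hc]]]] := step t (leqnn t).
have -> : b = x by apply/ffunP=> j; rewrite hc // orbC ltnNge orNb.
by exists m2.
Qed.

Lemma fiber d : forall m m' : 'X_{1..#|Nset r|}, mdeg m' = d -> psi m = psi m' ->
  I ('X_[m] - 'X_[m']).
Proof.
elim: d => [|d IH] m m' hd hp.
  have m'0 : m' = 0%MM by apply/eqP; rewrite -mdeg_eq0 hd.
  suff -> : m = m' by rewrite subrr; apply: ig0.
  rewrite m'0; apply/mnmP=> v; rewrite mnm0E; apply/eqP; rewrite -leqn0 leqNgt; apply/negP => hv.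
  have [tau ht0] := tok_ex (enum_val v).
  have := psi_ge m v tau; rewrite hp m'0 psi0 mnm0E leqn0 muln_eq0 => /orP[/eqP|/eqP]; lia.
have : (0 < mdeg m')%N by rewrite hd.
rewrite mdegE => /sum_pos [v /= hv].
set b := enum_val v.
have hb : forall tau, (cnt b tau <= psi m (enum_rank tau))%N.
  move=> tau; rewrite hp; apply: leq_trans (psi_ge m' v tau); by rewrite leq_pmull.
have [m2 [h1 h2 h3]] : exists m2, [/\ I ('X_[m] - 'X_[m2]), psi m2 = psi m & (0 < m2 v)%N].
  case: (boolP (b \in S)) => bS.
    by have [m2 [g1 g2 g3]] := move_b bS hb; exists m2; split=> //; rewrite -(enum_valK v).
  exists m; split=> //; first by rewrite subrr; apply: ig0.
  have := leq_trans (cnt_out bS) (hb _) => /psi_pos [w [hw /cnt_out_inv hwb]].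
  by have <- : w = v by apply: enum_val_inj.
have [m2r e2] := split_mnm h3.
have [m'r e'] := split_mnm hv.
have hd' : mdeg m'r = d by move: hd; rewrite e' mdegD mdeg1 addn1 => -[].
have hp' : psi m2r = psi m'r.
  apply/mnmP=> j; move/mnmP: (etrans h2 hp) => /(_ j).
  by rewrite e2 e' !psiD !mnmDE => /addIn.
have := IH _ _ hd' hp'.
move=> hI.
rewrite (_ : 'X_[m] - 'X_[m'] = ('X_[m] - 'X_[m2]) + 'X_[U_(v)] * ('X_[m2r] - 'X_[m'r])).
  by apply: igD => //; apply: igM.
rewrite e2 e' !mpolyXD; ring.
Qed.


Definition lv : #|Nset r|.-tuple {mpoly F[#|Tk|]} :=
  [tuple 'X_[psi U_(i)] | i < #|Nset r|].

Lemma phiX m : 'X_[m] \mPo lv = 'X_[psi m].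
Proof.
rewrite comp_mpolyX (eq_bigr (fun i => 'X_[psi U_(i)] ^+ m i)); last by move=> i _; rewrite tnth_mktuple.
rewrite mprodXnE; congr 'X_[_]; apply/mnmP=> j; rewrite mnm_sumE mnmE.
by apply: eq_bigr => i _; rewrite mulmnE psiU mulnC.
Qed.

Lemma phi_gen g : (exists (i : 'I_n) (a b : Nset r),
    [/\ (i < t)%N, connected_in S a b & g = fbin F i a b]) -> g \mPo lv = 0.
Proof.
case=> i [a [b [hi /conn_inP [aS hab] ->]]].
rewrite /fbin /xv -!mpolyXD rmorphB /= !phiX; apply/eqP; rewrite subr_eq0; apply/eqP.
congr 'X_[_]; apply/mnmP=> j; rewrite !psiD !mnmDE !psiU !enum_rankK.
by rewrite (swap_cnt _ hi aS hab).
Qed.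

Lemma I_ker p : I p -> p \mPo lv = 0.
Proof.
case=> s [hs ->]; rewrite rmorph_sum /= big1_seq // => q /andP[_ hq].
by rewrite rmorphM /= (phi_gen (hs q hq)) mulr0.
Qed.

Lemma coef_phi p nu : (p \mPo lv)@_nu = \sum_(m <- msupp p) p@_m * (psi m == nu)%:R.
Proof.
rewrite comp_mpolyEX raddf_sum /=; apply: eq_bigr => m _.
by rewrite mcoeffZ phiX mcoeffX.
Qed.

Lemma ker_I p : p \mPo lv = 0 -> I p.
Proof.
move=> hp; set s := msupp p.
pose repv nu := nth 0%MM s (find (fun m' => psi m' == nu) s).
have hrep m : m \in s -> psi (repv (psi m)) = psi m.
  move=> ms; apply/eqP; rewrite /repv; apply: (@nth_find _ 0%MM (fun m' => psi m' == psi m)).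
  by apply/hasP; exists m.
pose Q := \sum_(m <- s) p@_m *: 'X_[repv (psi m)].
have hQ : Q = 0.
  apply/mpolyP=> mu; rewrite mcoeff0 /Q raddf_sum /=.
  under eq_bigr => m _ do rewrite mcoeffZ mcoeffX.
  case: (boolP (has (fun m1 => repv (psi m1) == mu) s)).
    case/hasP => m1 m1s /eqP hm1.
    transitivity ((p \mPo lv)@_(psi m1)); last by rewrite hp mcoeff0.
    rewrite coef_phi.
    apply: eq_big_seq => m ms; congr (_ * _%:R).
    case: (eqVneq (psi m) (psi m1)) => [h|h]; first by rewrite h hm1 eqxx.
    case: (eqVneq (repv (psi m)) mu) => // h'; case/negP: h; apply/eqP.
    by rewrite -(hrep m ms) -(hrep m1 m1s) h' hm1.
  move/hasPn => hn; rewrite big1_seq // => m /andP[_ ms].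
  by rewrite (negbTE (hn m ms)) mulr0.
have -> : p = \sum_(m <- s) p@_m *: ('X_[m] - 'X_[repv (psi m)]) + Q.
  rewrite /Q -big_split /= {1}(mpolyE p); apply: eq_bigr => m _.
  by rewrite scalerBr subrK.
rewrite hQ addr0; apply: igsum => m ms; rewrite -mul_mpolyC; apply: igM.
apply: (fiber (erefl _)); by rewrite hrep.
Qed.

Lemma Itilde_prime : prime_ideal I.
Proof.
split.
  by move/I_ker; rewrite rmorph1 => /eqP; rewrite oner_eq0.
move=> a b /I_ker; rewrite rmorphM /= => /eqP; rewrite mulf_eq0 => /orP[] /eqP h.
  by left; apply: ker_I.
by right; apply: ker_I.
Qed.

Definition lv0 : #|Nset r|.-tuple (polyR F r) :=
  [tuple if enum_val i \in S then 'X_i else 0 | i < #|Nset r|].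

Lemma lv0X a : (xv F a) \mPo lv0 = if a \in S then xv F a else 0.
Proof. by rewrite /xv comp_mpolyXU -tnth_nth tnth_mktuple enum_rankK. Qed.

Lemma PS_to p : PS F t S p -> I (p \mPo lv0).
Proof.
case=> u [v [[su [hu ->]] [sv [hv ->]] ->]].
rewrite rmorphD /= !rmorph_sum /=; rewrite big1_seq ?add0r; last first.
  move=> q /andP[_ /hu [a [aS ->]]]; by rewrite rmorphM /= lv0X (negbTE aS) mulr0.
apply: igsum => q /hv [i [a [b [hi hab eg]]]]; rewrite rmorphM /= eg; apply: igM; apply: igG.
exists i, a, b; split=> //.
move/conn_inP: hab => [aS hab].
have bS := conn_S aS hab.
have hba : connect e b a by rewrite csym.
rewrite /fbin rmorphB !rmorphM /= !lv0X aS bS !closure //.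
Qed.

Lemma VarS_diff p : VarS F S (p - (p \mPo lv0)).
Proof.
have -> : p - (p \mPo lv0) = \sum_(m <- msupp p) p@_m *: ('X_[m] - ('X_[m] \mPo lv0)).
  symmetry; rewrite (eq_bigr (fun m => p@_m *: 'X_[m] - p@_m *: ('X_[m] \mPo lv0))); last by move=> m _; rewrite scalerBr.
  by rewrite sumrB -comp_mpolyEX -mpolyE.
apply: igsum => m _; rewrite -mul_mpolyC; apply: igM.
rewrite comp_mpolyX.
case: (pickP (fun i => (0 < m i)%N && (enum_val i \notin S))) => [v /andP[hv vS]|hn].
  rewrite (bigD1 v) //= tnth_mktuple (negbTE vS) expr0n.
  rewrite (_ : (m v == 0%N) = false); last by move: hv; case: (m v).
  rewrite mul0r subr0.
  have [mr ->] := split_mnm hv; rewrite mpolyXD; apply: igM; apply: igG.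
  by exists (enum_val v); rewrite /xv enum_valK.
rewrite (eq_bigr (fun i => 'X_i ^+ m i)); last first.
  move=> i _; rewrite tnth_mktuple; case: ifP => // iS.
  have := hn i; rewrite iS andbT; by case: (m i) => // k; rewrite /= => -[].
by rewrite -mpolyXE_id subrr; apply: ig0.
Qed.

Lemma PS_from p : I (p \mPo lv0) -> PS F t S p.
Proof.
move=> h; exists (p - (p \mPo lv0)), (p \mPo lv0); split=> //; first exact: VarS_diff.
by rewrite subrK.
Qed.

Lemma PS_prime : prime_ideal (PS F t S).
Proof.
have [n1 pr] := Itilde_prime.
split.
  by move/PS_to; rewrite rmorph1.
move=> a b /PS_to; rewrite rmorphM /= => /pr [] /PS_from; auto.
Qed.

End Comb.

Unset Implicit Arguments.
Local Close Scope ring_scope.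

Theorem theorem4p5 (F : fieldType) (n : nat) (r : 'I_n -> nat)
  (hr : forall i, (0 < r i)%N) (t : nat) (ht : (1 <= t <= n)%N)
  (S : {set Nset r}) (hS : switchable t S) :
  prime_ideal (Itilde F t S) /\ prime_ideal (PS F t S).
Proof.
have htn : (t <= n)%N by case/andP: ht.
split; [exact: (Itilde_prime hS htn) | exact: (PS_prime hS htn)].
Qed.
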